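(* Let $d\ge 2$ and define on $\mathbb{N}_{\ge d-1}=\{d-1,d,d+1,\dots\}$ the operation $a\oplus b=R_d(a+1,b+1)-1$. Then $(\mathbb{N}_{\ge d-1},\oplus,\le,d-1)$ is a totally ordered unital magma, and for every finite set $A$ of hyperplanes in $\mathbb{R}^d$ with $|A|\ge d-1$, the set function $\mu_A$ (defined on all subsets of $\mathbb{R}^d$) takes values in $\mathbb{N}_{\ge d-1}$, is monotone, and is $\mathcal{H}$-subadditive with respect to $\oplus$.
   Context: For a finite set $A$ of hyperplanes in $\mathbb{R}^d$, $V(A)$ is the set of points that are the unique common point of some $d$ hyperplanes of $A$, and $\mu_A(S)=\max\{|A'| : A'\subseteq A,\ V(A')\subseteq S\}$ for $S\subseteq\mathbb{R}^d$. $R_d(a,b)$ is the hypergraph Ramsey number: the least $R$ such that every 2-colouring (colours 1, 2) of the $d$-subsets of an $R$-set contains an $a$-set with all $d$-subsets coloured 1 or a $b$-set with all $d$-subsets coloured 2. A totally ordered unital magma $(M,\oplus,\le,e)$ is a totally ordered set with a binary operation $\oplus$ closed on $M$, having neutral element $e$, and monotone in each argument. $\mu$ is monotone if $X\subseteq Y\Rightarrow\mu(X)\le\mu(Y)$, and $\mathcal{H}$-subadditive if for every finite family $h_1,\dots,h_m$ of open halfspaces, $\mu(h_1\cup\dots\cup h_m)\le\mu(h_1)\oplus(\mu(h_2)\oplus(\cdots\oplus\mu(h_m))\cdots)$. *)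

(* Defs.v *)
From HB Require Import structures.
From mathcomp Require Import all_boot all_order all_algebra.
From Stdlib Require Import ClassicalEpsilon.
Set Implicit Arguments. Unset Strict Implicit. Unset Printing Implicit Defensive.
Import Order.TTheory GRing.Theory Num.Theory.

Definition pbool (P : Prop) : bool :=
  if excluded_middle_informative P then true else false.

Definition ramsey_ok (d a b N : nat) : bool :=
  [forall c : {ffun {set 'I_N} -> bool},
     [exists S : {set 'I_N}, (#|S| == a) &&
        [forall T : {set 'I_N}, ((T \subset S) && (#|T| == d)) ==> c T]]
  || [exists S : {set 'I_N}, (#|S| == b) &&
        [forall T : {set 'I_N}, ((T \subset S) && (#|T| == d)) ==> ~~ c T]]].

(* R_d(a,b): the least such N (Ramsey's theorem guarantees existence;
   the default 0 is never used). *)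
Definition ramsey (d a b : nat) : nat :=
  match excluded_middle_informative (exists N, ramsey_ok d a b N) with
  | left h => ex_minn h
  | right _ => 0
  end.

Definition oplus (d : nat) (a b : nat) : nat := (ramsey d a.+1 b.+1).-1.

Definition tou_magma (M : nat -> Prop) (op : nat -> nat -> nat) (e : nat) : Prop :=
  [/\ M e,
      (forall a b, M a -> M b -> M (op a b)),
      (forall a, M a -> op e a = a /\ op a e = a)
    & (forall a a' b, M a -> M a' -> M b -> a <= a' ->
          op a b <= op a' b /\ op b a <= op b a')].

Section Geom.
Variables (R : realFieldType) (d : nat).
Local Open Scope ring_scope.

Definition dotv (a x : 'rV[R]_d) : R := \sum_(i < d) a 0 i * x 0 i.

(* a hyperplane is given by (a, b) with a != 0 : { x | a.x = b } *)
Definition on_hyp (h : 'rV[R]_d * R) (x : 'rV[R]_d) : Prop := dotv h.1 x = h.2.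

(* an open halfspace is given by (a, b) with a != 0 : { x | a.x > b } *)
Definition in_ohalf (h : 'rV[R]_d * R) (x : 'rV[R]_d) : Prop := h.2 < dotv h.1 x.

(* A finite set of hyperplanes: a family H : 'I_n -> hyperplanes,
   with nonzero normals and pairwise distinct point sets; sub-arrangements
   A' are subsets B of indices. *)
Variable n : nat.
Variable H : 'I_n -> 'rV[R]_d * R.

(* x \in V(B): x is the unique common point of some d hyperplanes of B *)
Definition inV (B : {set 'I_n}) (x : 'rV[R]_d) : Prop :=
  exists S : {set 'I_n}, [/\ S \subset B, #|S| = d &
     forall y, (forall i, i \in S -> on_hyp (H i) y) <-> y = x].

Definition Vsub (B : {set 'I_n}) (S : 'rV[R]_d -> Prop) : Prop :=
  forall x, inV B x -> S x.

Definition mu (S : 'rV[R]_d -> Prop) : nat :=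
  \max_(B : {set 'I_n} | pbool (Vsub B S)) #|B|.

End Geom.

Definition set_monotone (R : realFieldType) (d : nat)
  (m : ('rV[R]_d -> Prop) -> nat) : Prop :=
  forall X Y : 'rV[R]_d -> Prop, (forall x, X x -> Y x) -> m X <= m Y.

Fixpoint fold_r (op : nat -> nat -> nat) (x : nat) (s : seq nat) : nat :=
  match s with
  | [::] => x
  | y :: s' => op x (fold_r op y s')
  end.

Definition H_subadditive (R : realFieldType) (d : nat) (op : nat -> nat -> nat)
  (m : ('rV[R]_d -> Prop) -> nat) : Prop :=
  forall (h : 'rV[R]_d * R) (hs : seq ('rV[R]_d * R)),
    (forall g, g \in h :: hs -> (g.1 != 0)%R) ->
    m (fun x => exists2 g, g \in h :: hs & in_ohalf g x)
      <= fold_r op (m (in_ohalf h)) [seq m (in_ohalf g) | g <- hs].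

(* Main.v *)
Require Import Defs.
From HB Require Import structures.
From mathcomp Require Import all_boot all_order all_algebra.
From Stdlib Require Import ClassicalEpsilon.
Set Implicit Arguments. Unset Strict Implicit. Unset Printing Implicit Defensive.
Import Order.TTheory GRing.Theory Num.Theory.

Lemma sub_of_card (T:finType) (A:{set T}) k :
  k <= #|A| -> exists2 S : {set T}, S \subset A & #|S| = k.
Proof.
move/card_geqP=> [s [us ss sA]].
exists [set x in s]; first by apply/subsetP=> x; rewrite inE; apply: sA.
by rewrite cardsE (card_uniqP us).
Qed.

Definition RP (T:finType) (d a b : nat) (B:{set T}) : Prop :=
  forall c : {set T} -> bool,
  (exists S : {set T}, [/\ S \subset B, #|S| = a & forall U : {set T}, U \subset S -> #|U| = d -> c U]) \/
  (exists S : {set T}, [/\ S \subset B, #|S| = b & forall U : {set T}, U \subset S -> #|U| = d -> ~~ c U]).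

Lemma RP_mono (T:finType) d a b a' b' (B:{set T}) :
  a <= a' -> b <= b' -> RP d a' b' B -> RP d a b B.
Proof.
move=> ha hb h c; case: (h c) => [[S [SB cS Sc]]|[S [SB cS Sc]]].
- left; have [S' S'S cS'] : exists2 S' : {set T}, S' \subset S & #|S'| = a by apply: sub_of_card; rewrite cS.
  exists S'; split=> //; first exact: subset_trans S'S SB.
  by move=> U US; apply: Sc; apply: subset_trans US S'S.
- right; have [S' S'S cS'] : exists2 S' : {set T}, S' \subset S & #|S'| = b by apply: sub_of_card; rewrite cS.
  exists S'; split=> //; first exact: subset_trans S'S SB.
  by move=> U US; apply: Sc; apply: subset_trans US S'S.
Qed.

Lemma RP_sym (T:finType) d a b (B:{set T}) : RP d a b B -> RP d b a B.
Proof.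
move=> h c; case: (h (fun U => ~~ c U)) => [[S [SB cS Sc]]|[S [SB cS Sc]]].
- by right; exists S; split.
- left; exists S; split=> // U US cU; move: (Sc U US cU); by rewrite negbK.
Qed.

Lemma RP_ok d a b N : RP d a b [set: 'I_N] -> ramsey_ok d a b N.
Proof.
move=> h; apply/forallP=> c; case: (h (fun U => c U)) => [[S [_ cS Sc]]|[S [_ cS Sc]]].
- apply/orP; left; apply/existsP; exists S; rewrite cS eqxx /=.
  apply/forallP=> U; apply/implyP=> /andP[US /eqP cU]; exact: Sc.
- apply/orP; right; apply/existsP; exists S; rewrite cS eqxx /=.
  apply/forallP=> U; apply/implyP=> /andP[US /eqP cU]; exact: Sc.
Qed.

Lemma ok_RP d a b N : ramsey_ok d a b N ->
  forall (T:finType) (B:{set T}), N <= #|B| -> RP d a b B.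
Proof.
move=> /forallP h T B hN c.
pose f (i : 'I_N) : T := enum_val (widen_ord hN i).
have finj : injective f.
  by move=> i j /enum_val_inj /(congr1 val) /= /val_inj.
have fB i : f i \in B by exact: enum_valP.
have key (S : {set 'I_N}) (U : {set T}) : U \subset f @: S -> exists2 U' : {set 'I_N}, U' \subset S & (U = f @: U' /\ #|U'| = #|U|).
  move=> US; pose U' := [set i | f i \in U].
  have eU : U = f @: U'.
    apply/setP=> x; apply/idP/idP.
      by move=> xU; case/imsetP: (subsetP US x xU) => j _ ex; apply/imsetP; exists j; rewrite ?inE -?ex.
    by case/imsetP=> j; rewrite inE => + ->.
  exists U'; last by split=> //; rewrite eU card_imset.
  apply/subsetP=> i; rewrite inE => /(subsetP US) /imsetP [j jS /finj ->] //.
have SB (S : {set 'I_N}) : f @: S \subset B.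
  by apply/subsetP=> x /imsetP [i _ ->].
case/orP: (h [ffun U : {set 'I_N} => c (f @: U)]) => /existsP [S /andP [/eqP cS /forallP hS]].
- left; exists (f @: S); split=> //; first by rewrite card_imset.
  move=> U US cU; have [U' U'S [eU cU']] := key S U US; rewrite eU.
  by move: (hS U'); rewrite U'S cU' cU eqxx ffunE.
- right; exists (f @: S); split=> //; first by rewrite card_imset.
  move=> U US cU; have [U' U'S [eU cU']] := key S U US; rewrite eU.
  by move: (hS U'); rewrite U'S cU' cU eqxx ffunE.
Qed.

Lemma add_vertex (T:finType) d (P : {set T} -> Prop) (v:T) (X Y:{set T}) :
  v \notin X -> Y \subset X ->
  (forall U : {set T}, U \subset X -> #|U| = d -> P (v |: U)) ->
  (forall U : {set T}, U \subset Y -> #|U| = d.+1 -> P U) ->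
  forall U : {set T}, U \subset v |: Y -> #|U| = d.+1 -> P U.
Proof.
move=> vX YX hX hY U UvY cU; case: (boolP (v \in U)) => vU.
- rewrite -(setD1K vU); apply: hX.
    apply/subsetP=> x; rewrite !inE => /andP [xv xU].
    move: (subsetP UvY x xU); rewrite !inE (negbTE xv) /= => xY.
    exact: (subsetP YX).
  by move: cU; rewrite (cardsD1 v U) vU add1n => -[].
- apply: hY cU; apply/subsetP=> x xU.
  move: (subsetP UvY x xU); rewrite !inE; case/orP=> // /eqP xv.
  by move: vU; rewrite -xv xU.
Qed.

Lemma ramsey_thm d : forall a b, exists N, forall (T:finType) (B:{set T}),
  N <= #|B| -> RP d a b B.
Proof.
elim: d => [|d IHd] a b.
  exists (maxn a b) => T B hB c; case: (boolP (c set0)) => c0.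
  - left; have [S SB cS] : exists2 S : {set T}, S \subset B & #|S| = a.
      by apply: sub_of_card; apply: leq_trans hB; apply: leq_maxl.
    by exists S; split=> // U _ /cards0_eq ->.
  - right; have [S SB cS] : exists2 S : {set T}, S \subset B & #|S| = b.
      by apply: sub_of_card; apply: leq_trans hB; apply: leq_maxr.
    by exists S; split=> // U _ /cards0_eq ->.
elim: a b => [|a IHa] b.
  exists 0 => T B _ c; left; exists set0; split; rewrite ?sub0set ?cards0 //.
  by move=> U; rewrite subset0 => /eqP ->; rewrite cards0.
elim: b => [|b IHb].
  exists 0 => T B _ c; right; exists set0; split; rewrite ?sub0set ?cards0 //.
  by move=> U; rewrite subset0 => /eqP ->; rewrite cards0.
have [N1 h1] := IHa b.+1.
have [N2 h2] := IHb.
have [M hM] := IHd N1 N2.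
exists M.+1 => T B hB c.
have [v vB] : exists v, v \in B by apply/card_gt0P; apply: leq_trans hB.
have hB' : M <= #|B :\ v| by move: hB; rewrite (cardsD1 v B) vB.
have vXs (X : {set T}) : X \subset B :\ v -> v \notin X.
  by move=> XB; apply/negP=> /(subsetP XB); rewrite !inE eqxx.
have XBs (X : {set T}) : X \subset B :\ v -> X \subset B.
  by move=> XB; apply: subset_trans XB _; apply: subsetDl.
have vYB (X Y : {set T}) : X \subset B :\ v -> Y \subset X -> v |: Y \subset B.
  move=> XB YX; rewrite subUset sub1set vB /=; apply: subset_trans YX _; exact: XBs.
have cvY (X Y : {set T}) : X \subset B :\ v -> Y \subset X -> #|v |: Y| = #|Y|.+1.
  move=> XB YX; rewrite cardsU1; suff -> : v \notin Y by [].
  by apply/negP=> /(subsetP YX); apply/negP; apply: vXs.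
case: (hM T (B :\ v) hB' (fun U => c (v |: U))) => [[X [XB cX Xc]]|[X [XB cX Xc]]].
- case: (h1 T X (eq_leq (esym cX)) c) => [[Y [YX cY Yc]]|[Y [YX cY Yc]]].
  + left; exists (v |: Y); split; [exact: vYB YX| by rewrite (cvY X) ?cY|].
    exact: (add_vertex (P := fun U => c U) (vXs X XB) YX).
  + right; exists Y; split=> //; apply: subset_trans YX _; exact: XBs.
- case: (h2 T X (eq_leq (esym cX)) c) => [[Y [YX cY Yc]]|[Y [YX cY Yc]]].
  + left; exists Y; split=> //; apply: subset_trans YX _; exact: XBs.
  + right; exists (v |: Y); split; [exact: vYB YX| by rewrite (cvY X) ?cY|].
    exact: (add_vertex (P := fun U => ~~ c U) (vXs X XB) YX).
Qed.

Lemma ramsey_spec d a b : ramsey_ok d a b (ramsey d a b) /\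
  forall N, ramsey_ok d a b N -> ramsey d a b <= N.
Proof.
rewrite /ramsey; case: excluded_middle_informative => [h|h].
  by case: ex_minnP.
exfalso; apply: h; have [N hN] := ramsey_thm d a b.
by exists N; apply: RP_ok; apply: hN; rewrite cardsT card_ord.
Qed.

Lemma ramsey_big d a b (T:finType) (B:{set T}) : ramsey d a b <= #|B| -> RP d a b B.
Proof. by apply: ok_RP; case: (ramsey_spec d a b). Qed.

Lemma ramsey_le d a b N : RP d a b [set: 'I_N] -> ramsey d a b <= N.
Proof. by move/RP_ok; case: (ramsey_spec d a b) => _; apply. Qed.

Lemma RPT d a b N : ramsey d a b = N -> RP d a b [set: 'I_N].
Proof. by move=> e; apply: ramsey_big; rewrite cardsT card_ord e. Qed.

Lemma ramsey_mono d a b a' b' : a <= a' -> b <= b' -> ramsey d a b <= ramsey d a' b'.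
Proof.
move=> ha hb; apply: ramsey_le; apply: (RP_mono ha hb); exact: RPT.
Qed.

Lemma ramsey_sym d a b : ramsey d a b = ramsey d b a.
Proof.
by apply/eqP; rewrite eqn_leq !ramsey_le //; apply: RP_sym; apply: RPT.
Qed.

Lemma ramsey_lb d a b : minn a b <= ramsey d a b.
Proof.
have := RPT (erefl (ramsey d a b)) (fun _ => true).
case=> -[S [_ cS _]]; have := max_card (mem S); rewrite card_ord cS.
  by move=> h; apply: leq_trans h; apply: geq_minl.
by move=> h; apply: leq_trans h; apply: geq_minr.
Qed.

Lemma ramsey_unit d b : d <= b -> ramsey d d b = b.
Proof.
move=> db; apply/eqP; rewrite eqn_leq; apply/andP; split.
  apply: ramsey_le => c.
  case: (boolP [exists U : {set 'I_b}, (#|U| == d) && c U]).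
    case/existsP=> U /andP [/eqP cU cUt]; left; exists U; split=> //.
    move=> U' U'U cU'; have : U' == U by rewrite eqEcard U'U cU' cU leqnn.
    by move/eqP ->.
  move=> hn; right; exists [set: 'I_b]; split; rewrite ?cardsT ?card_ord //.
  move=> U _ cU; apply/negP=> cUt; move/negP: hn; apply; apply/existsP.
  by exists U; rewrite cU eqxx.
have := RPT (erefl (ramsey d d b)) (fun _ => false).
case=> -[S [_ cS Sc]].
  by move: (Sc S (subxx S) cS).
by have := max_card (mem S); rewrite card_ord cS.
Qed.

Lemma oplus_magma d : 2 <= d -> tou_magma (fun a => d.-1 <= a) (oplus d) d.-1.
Proof.
move=> hd; have ed : (d.-1).+1 = d by rewrite prednK // ltnW.
split=> //.
- move=> a b ha hb; rewrite /oplus.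
  have h := ramsey_lb d a.+1 b.+1; rewrite minnSS in h.
  apply: (@leq_trans (minn a b)); first by rewrite leq_min ha hb.
  rewrite -ltnS; exact: leq_trans h (leqSpred _).
- move=> a ha; rewrite /oplus ed; split.
    by rewrite ramsey_unit // -ed ltnS.
  by rewrite ramsey_sym ramsey_unit // -ed ltnS.
- move=> a a' b _ _ _ h; rewrite /oplus; split; rewrite -!subn1 leq_sub2r //; apply: ramsey_mono; rewrite ?ltnS //.
Qed.

Lemma pboolP (P : Prop) : pbool P = true <-> P.
Proof. by rewrite /pbool; case: excluded_middle_informative. Qed.

Section G.
Variables (R : realFieldType) (d n : nat) (H : 'I_n -> 'rV[R]_d * R).

Lemma mu_ge (S : 'rV[R]_d -> Prop) (B : {set 'I_n}) : Vsub H B S -> #|B| <= mu H S.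
Proof. by move=> h; rewrite /mu; apply: (leq_bigmax_cond (P := fun B => pbool (Vsub H B S))); apply/pboolP. Qed.

Lemma mu_le (S : 'rV[R]_d -> Prop) m : (forall B, Vsub H B S -> #|B| <= m) -> mu H S <= m.
Proof. by move=> h; rewrite /mu; apply/bigmax_leqP => B /pboolP; apply: h. Qed.

Fixpoint Un (Ps : seq ('rV[R]_d -> Prop)) (x : 'rV[R]_d) : Prop :=
  match Ps with [::] => False | P :: Ps' => P x \/ Un Ps' x end.

Lemma subadd_gen (Ps : seq ('rV[R]_d -> Prop)) : forall P B,
  Vsub H B (Un (P :: Ps)) -> #|B| <= fold_r (oplus d) (mu H P) (map (mu H) Ps).
Proof.
elim: Ps => [|Q Ps IH] P B hB /=.
  by apply: mu_ge => x /hB [].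
set X := fold_r _ _ _.
rewrite leqNgt; apply/negP => hlt.
have hR : ramsey d (mu H P).+1 X.+1 <= #|B|.
  by move: hlt; rewrite /oplus; case: (ramsey _ _ _).
have := ramsey_big hR (fun U => pbool (forall x,
   (forall y, (forall i, i \in U -> on_hyp (H i) y) <-> y = x) -> P x)).
case=> -[S [SB cS Sc]].
- have : Vsub H S P.
    move=> x [U [US cU hU]]; have := Sc U US cU; move/pboolP; apply; exact: hU.
  by move/mu_ge; rewrite cS ltnn.
- have : Vsub H S (Un (Q :: Ps)).
    move=> x [U [US cU hU]].
    have : inV H B x by exists U; split=> //; apply: subset_trans US SB.
    case/hB => // Px; move: (Sc U US cU); move/negP; case; apply/pboolP.
    move=> x' hx'; suff -> : x' = x by [].
    by apply/(hU x').1/(hx' x').2.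
  by move/IH; rewrite -/X cS ltnn.
Qed.

Lemma Un_ohalf (hs : seq ('rV[R]_d * R)) x :
  (exists2 g, g \in hs & in_ohalf g x) -> Un (map (@in_ohalf R d) hs) x.
Proof.
elim: hs => [|g hs IH] [g' /=]; first by rewrite in_nil.
rewrite in_cons; case/orP=> [/eqP -> ?|g'hs ?]; [by left| right].
by apply: IH; exists g'.
Qed.

End G.

Theorem mainTheorem7 (R : realFieldType) (d : nat) (hd : 2 <= d) :
  tou_magma (fun a => d.-1 <= a) (oplus d) d.-1 /\
  forall (n : nat) (H : 'I_n -> 'rV[R]_d * R),
    (forall i, ((H i).1 != 0)%R) ->
    (forall i j, i != j ->
       ~ (forall x, on_hyp (H i) x <-> on_hyp (H j) x)) ->
    d.-1 <= n ->
    [/\ (forall S : 'rV[R]_d -> Prop, d.-1 <= mu H S),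
        set_monotone (mu H)
      & H_subadditive (oplus d) (mu H)].
Proof.
split; first exact: oplus_magma.
move=> n H _ _ hn; split.
- move=> S.
  have [B _ cB] : exists2 B : {set 'I_n}, B \subset [set: 'I_n] & #|B| = d.-1.
    by apply: sub_of_card; rewrite cardsT card_ord.
  rewrite -cB; apply: mu_ge => x [U [UB cU _]].
  have := subset_leq_card UB; rewrite cU cB.
  by rewrite leqNgt ltn_predL (leq_trans _ hd).
- move=> X Y hXY; apply: mu_le => B hB; apply: mu_ge => x /hB; exact: hXY.
- move=> h hs _; apply: mu_le => B hB.
  have := @subadd_gen R d n H [seq in_ohalf g | g <- hs] (in_ohalf h) B.
  rewrite -map_comp; apply => x /hB; exact: (@Un_ohalf R d (h :: hs) x).
Qed.
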